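(* Let $C\ge 3$ be an integer and $r>0$. Define on $\mathbb{R}^C$ the functions $f(\mathbf{h})=H(\mathrm{softmax}(\mathbf{h}))$, $g_1(\mathbf{h})=\sum_{i=1}^C h_i$, and $g_2(\mathbf{h})=-\frac{r^2}{2}+\sum_{i=1}^C\frac{h_i^2}{2}$. Suppose $\mathbf{h}\in\mathbb{R}^C$ and $\lambda_1,\lambda_2\in\mathbb{R}$ satisfy $$\nabla f(\mathbf{h})+\lambda_1\nabla g_1(\mathbf{h})+\lambda_2\nabla g_2(\mathbf{h})=0.$$ If $\alpha,\beta,\gamma\in\{1,\dots,C\}$ satisfy $h_\alpha\ge h_\beta\ge h_\gamma$, then $h_\alpha=h_\beta$ or $h_\beta=h_\gamma$. (Consequently the coordinates of $\mathbf{h}$ take at most two distinct values.)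
   Context: For $\mathbf{h}=(h_1,\dots,h_C)\in\mathbb{R}^C$, $\mathrm{softmax}(\mathbf{h})\in\mathbb{R}^C$ is the probability vector with entries $y_i=e^{h_i}/\sum_{j=1}^C e^{h_j}$. For a probability vector $\mathbf{y}$, $H(\mathbf{y})=-\sum_{i=1}^C y_i\log y_i$ is its Shannon entropy (natural logarithm). Gradients are with respect to $\mathbf{h}$. *)

(* Defs.v *)
From mathcomp Require Import all_boot all_order all_algebra.
From mathcomp Require Import all_classical all_reals all_analysis.
Set Implicit Arguments. Unset Strict Implicit. Unset Printing Implicit Defensive.
Import Order.TTheory GRing.Theory Num.Theory.
Local Open Scope ring_scope.

Definition softmax (R : realType) (C : nat) (h : 'I_C -> R) : 'I_C -> R :=
  fun i => expR (h i) / \sum_(j < C) expR (h j).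

Definition entropy (R : realType) (C : nat) (y : 'I_C -> R) : R :=
  - \sum_(i < C) y i * ln (y i).

Definition f_ent (R : realType) (C : nat) (h : 'I_C -> R) : R :=
  entropy (softmax h).

Definition g1 (R : realType) (C : nat) (h : 'I_C -> R) : R :=
  \sum_(i < C) h i.

Definition g2 (R : realType) (C : nat) (r : R) (h : 'I_C -> R) : R :=
  - (r ^+ 2) / 2 + \sum_(i < C) h i ^+ 2 / 2.

(* i-th partial derivative of F at h: derivative at t = 0 of t |-> F (h + t e_i);
   the gradient of F at h is the vector (partial F h i)_i. *)
Definition partial (R : realType) (C : nat) (F : ('I_C -> R) -> R)
    (h : 'I_C -> R) (i : 'I_C) : R :=
  derive1 (fun t : R => F (fun j => h j + (if j == i then t else 0))) 0.

(* Main.v *)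
Require Import Defs.
From mathcomp Require Import all_boot all_order all_algebra.
From mathcomp Require Import all_classical all_reals all_analysis.
From mathcomp Require Import ring lra.
Import Order.TTheory GRing.Theory Num.Theory.
Local Open Scope ring_scope.

Lemma shift_deriv (R : realType) (c d x : R) (F : R -> R) :
  is_derive x 1 F d -> is_derive (0:R) 1 (fun t => c + F (x + t)) d.
Proof.
move=> HF.
pose I : R -> R := id.
have Hu : is_derive (0:R) 1 (cst x + I) 1.
  by apply: is_derive_eq; rewrite /I /= add0r.
have Hc : is_derive (0:R) 1 (F \o (cst x + I)) (d * 1).
  apply: is_derive1_comp => //.
  have -> : (cst x + I) 0 = x by rewrite /I !fctE addr0.
  exact: HF.
have -> : (fun t => c + F (x + t)) = cst c + F \o (cst x + I).
  by apply: funext => t; rewrite !fctE.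
apply: is_derive_eq. by rewrite mulr1 scaler0 add0r ?mulr1 || by rewrite mul0r add0r mulr1.
Qed.

Lemma sum_shift (R : realType) (C : nat) (F : R -> R) (h : 'I_C -> R) i t :
  \sum_(j < C) F (h j + (if j == i then t else 0)) =
  \sum_(j < C | j != i) F (h j) + F (h i + t).
Proof.
rewrite (bigD1 i) //= eqxx addrC; congr (_ + _).
by apply: eq_bigr => j /negbTE ->; rewrite addr0.
Qed.

Lemma partialE (R : realType) (C : nat) (F : ('I_C -> R) -> R) h i d :
  is_derive (0:R) 1 (fun t : R => F (fun j => h j + (if j == i then t else 0))) d ->
  partial F h i = d.
Proof. by move=> H; rewrite /partial derive1E derive_val. Qed.

Lemma partial_g1 (R : realType) (C : nat) (h : 'I_C -> R) i : partial (@g1 R C) h i = 1.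
Proof.
apply: partialE; rewrite /g1.
under [fun t => _]funext => t do rewrite (@sum_shift _ _ id).
exact: shift_deriv.
Qed.

Lemma partial_g2 (R : realType) (C : nat) r (h : 'I_C -> R) i : partial (g2 r) h i = h i.
Proof.
apply: partialE; rewrite /g2.
under [fun t => _]funext => t do rewrite (@sum_shift _ _ (fun x => x ^+ 2 / 2)) addrA.
apply: (@shift_deriv _ _ _ _ (fun x => x ^+ 2 / 2)).
pose I : R -> R := id.
have -> : (fun x : R => x ^+ 2 / 2) = 2^-1 *: (I ^+ 2).
  by apply: funext => x; rewrite !fctE /I mulrC.
apply: is_derive_eq. rewrite /I /= expr1. change (2^-1 * ((2 * h i) * 1) = h i). by rewrite mulr1 mulrA mulVf ?mul1r. Qed.

Lemma ent_deriv (R : realType) (A B x : R) : 0 <= A ->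
  is_derive (0:R) 1 (fun t => ln (A + expR (x + t)) - (B + expR (x + t) * (x + t)) / (A + expR (x + t)))
    (expR x / (A + expR x) * ((B + expR x * x) / (A + expR x) - x)).
Proof.
move=> A0.
pose I : R -> R := id.
pose u := cst x + I.
have Hu : is_derive (0:R) 1 u 1.
  by apply: is_derive_eq; rewrite /I /= add0r.
have u0 : u 0 = x by rewrite /u /I !fctE addr0.
have HE : is_derive (0:R) 1 (expR \o u) (expR x * 1).
  have H1 : is_derive (u 0) 1 expR (expR x) by rewrite u0; exact: is_derive_expR.
  exact: (is_derive1_comp H1 Hu).
pose Zf := cst A + (expR \o u).
have HZ : is_derive (0:R) 1 Zf (expR x * 1).
  by apply: (is_derive_eq (is_deriveD (is_derive_cst _ _ _) HE)); rewrite add0r.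
have Z0 : Zf 0 = A + expR x by rewrite /Zf !fctE u0.
have Zpos : 0 < A + expR x by rewrite ltr_wpDl // expR_gt0.
pose Nf := cst B + (expR \o u) * u.
have HN : is_derive (0:R) 1 Nf (expR x * 1 * x + expR x * 1).
  apply: (is_derive_eq (is_deriveD (is_derive_cst _ _ _) (is_deriveM HE Hu))).
  rewrite /= u0 /GRing.scale /=; ring.
have HL : is_derive (0:R) 1 (@ln R \o Zf) ((A + expR x)^-1 * (expR x * 1)).
  apply: is_derive1_comp => //; rewrite Z0. exact: is_derive1_ln.
have HV : is_derive (0:R) 1 (fun t => (Zf t)^-1) (- (A + expR x) ^- 2 *: (expR x * 1)).
  rewrite -Z0; apply: is_deriveV => //; rewrite Z0 gt_eqF //.
have -> : (fun t => ln (A + expR (x + t)) - (B + expR (x + t) * (x + t)) / (A + expR (x + t)))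
   = @ln R \o Zf - Nf * (fun t => (Zf t)^-1).
  by apply: funext => t; rewrite /Zf /Nf /u /I !fctE.
apply: is_derive_eq.
have N0 : Nf 0 = B + expR x * x by rewrite /Nf /u /I !fctE addr0.
rewrite Z0 N0 /GRing.scale /=.
have Zn : A + expR x != 0 by rewrite gt_eqF.
by field.
Qed.

Lemma f_ent_closed (R : realType) (C : nat) (C0 : (0 < C)%N) (h : 'I_C -> R) :
  f_ent h = ln (\sum_(j < C) expR (h j)) - (\sum_(j < C) expR (h j) * h j) / (\sum_(j < C) expR (h j)).
Proof.

set Z := \sum_(j < C) expR (h j).
have Zpos : 0 < Z.
  rewrite /Z (bigD1 (Ordinal C0)) //= ltr_wpDr ?expR_gt0 //.
  by apply: sumr_ge0 => j _; rewrite expR_ge0.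
have Zn : Z != 0 by rewrite gt_eqF.
rewrite /f_ent /entropy /softmax -/Z.
have E : forall j, expR (h j) / Z * ln (expR (h j) / Z) = expR (h j) * h j / Z - ln Z * (expR (h j) / Z).
  move=> j; rewrite ln_div ?expRK; first by rewrite -/Z; field.
  - by rewrite posrE expR_gt0.
  - by rewrite posrE.
rewrite (eq_bigr _ (fun j _ => E j)).
rewrite sumrB -mulr_suml -mulr_sumr -mulr_suml divff // mulr1.
by rewrite opprB addrC.
Qed.

Lemma partial_f (R : realType) (C : nat) (h : 'I_C -> R) i :
  partial (@f_ent R C) h i =
  expR (h i) / (\sum_(j < C) expR (h j)) *
   ((\sum_(j < C) expR (h j) * h j) / (\sum_(j < C) expR (h j)) - h i).
Proof.
have C0 : (0 < C)%N by apply: leq_ltn_trans (ltn_ord i).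
apply: partialE.
under [fun t => _]funext => t do
  rewrite (@f_ent_closed _ _ C0) (@sum_shift _ _ expR) (@sum_shift _ _ (fun y => expR y * y)).
have A0 : 0 <= \sum_(j < C | j != i) expR (h j).
  by apply: sumr_ge0 => j _; rewrite expR_ge0.
apply: is_derive_eq; first exact: (@ent_deriv _ _ (\sum_(j < C | j != i) expR (h j) * h j) (h i) A0).
have HZ : \sum_(j < C) expR (h j) = \sum_(j < C | j != i) expR (h j) + expR (h i).
  by rewrite (bigD1 i) //= addrC.
have HN : \sum_(j < C) expR (h j) * h j = \sum_(j < C | j != i) expR (h j) * h j + expR (h i) * h i.
  by rewrite (bigD1 i) //= addrC.
by rewrite HZ HN.
Qed.

Lemma key_pos (R : realType) (tc tb ta wc wb wa k : R) :
  tc < tb -> tb < ta -> wc < wb -> wb < wa ->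
  tc * wc = k -> tb * wb = k -> ta * wa = k -> 0 <= k -> False.
Proof.
move=> h1 h2 h3 h4 e1 e2 e3 k0.
have [tb0|tb0|tb0] := ltgtP tb 0.
- have wb0 : wb <= 0 by nra.
  nra.
- have wb0 : 0 <= wb by nra.
  nra.
- have wa0 : wa = 0 by subst tb; nra.
  have wc0 : wc = 0 by subst tb; nra.
  lra.
Qed.

Theorem mainTheorem3 (R : realType) (C : nat) (r : R) (h : 'I_C -> R)
    (lambda1 lambda2 : R) :
  (3 <= C)%N -> 0 < r ->
  (forall i : 'I_C,
     partial (@f_ent R C) h i + lambda1 * partial (@g1 R C) h i
       + lambda2 * partial (g2 r) h i = 0) ->
  forall a b c : 'I_C, h b <= h a -> h c <= h b -> h a = h b \/ h b = h c.
Proof.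
move=> C3 r0 H a b c hab hbc.
set Z := \sum_(j < C) expR (h j).
have Zpos : 0 < Z.
  rewrite /Z (bigD1 a) //= ltr_wpDr ?expR_gt0 //.
  by apply: sumr_ge0 => j _; rewrite expR_ge0.
have Zn : Z != 0 by rewrite gt_eqF.
set M := (\sum_(j < C) expR (h j) * h j) / Z.
pose y j := expR (h j) / Z.
pose t j := h j - M.
pose w j := y j - lambda2.
pose k := lambda1 + lambda2 * M.
have Hk : forall j, t j * w j = k.
  move=> j; have := H j.
  rewrite partial_f partial_g1 partial_g2 -/Z -/M -/(y j) /t /w /k => Hj.
  lra.
have Hsum : \sum_(j < C) y j * t j = 0.
  have E : forall j, y j * t j = expR (h j) * h j / Z - M * (expR (h j) / Z).
    by move=> j; rewrite /y /t; field.
  rewrite (eq_bigr _ (fun j _ => E j)) sumrB -mulr_suml -mulr_sumr -mulr_suml -/Z -/M.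
  by rewrite divff // mulr1 subrr.
have ypos : forall j, 0 < y j by move=> j; rewrite /y divr_gt0 ?expR_gt0.
have mono : forall j l, h j < h l -> t j < t l /\ w j < w l.
  move=> j l hjl; split; first by rewrite /t ltrD2r.
  by rewrite /w ltrD2r /y ltr_pM2r ?invr_gt0 // ltr_expR.
have [eab|nab] := eqVneq (h a) (h b); first by left.
have [ebc|nbc] := eqVneq (h b) (h c); first by right.
have lab : h b < h a by rewrite lt_neqAle eq_sym nab hab.
have lbc : h c < h b by rewrite lt_neqAle eq_sym nbc hbc.
have [m1 m1'] := mono _ _ lab.
have [m2 m2'] := mono _ _ lbc.
exfalso.
have [kneg|kpos] := ltP k 0; last first.
  exact: (@key_pos _ _ _ _ _ _ _ _ m2 m1 m2' m1' (Hk c) (Hk b) (Hk a) kpos).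
have Hneg : forall j l, 0 < t j -> t l < 0 -> False.
  move=> j l tj tl.
  have wj : w j < 0 by have := Hk j; nra.
  have wl : 0 < w l by have := Hk l; nra.
  have hlj : h l < h j by move: tj tl; rewrite /t; lra.
  have [_ hw] := mono _ _ hlj; lra.
have tb0 : t b != 0 by apply/eqP => e; have := Hk b; rewrite e mul0r; lra.
case: (boolP [exists l, t l < 0]) => [/existsP [l Hl] | /existsPn Hall];
case: (boolP [exists l, 0 < t l]) => [/existsP [l' Hl'] | /existsPn Hall'].
- exact: (Hneg l' l).
- have : \sum_(j < C) y j * t j < 0.
    rewrite (bigD1 l) //=.
    have S0 : \sum_(i < C | i != l) y i * t i <= 0.
      by apply: sumr_le0 => j _; rewrite pmulr_rle0 // leNgt Hall'.
    have P0 : y l * t l < 0 by rewrite pmulr_rlt0.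
    lra.
  by rewrite Hsum ltxx.
- have : 0 < \sum_(j < C) y j * t j.
    rewrite (bigD1 l') //=.
    have S0 : 0 <= \sum_(i < C | i != l') y i * t i.
      by apply: sumr_ge0 => j _; rewrite pmulr_rge0 // leNgt Hall.
    have P0 : 0 < y l' * t l' by rewrite pmulr_rgt0.
    lra.
  by rewrite Hsum ltxx.
- have := Hall b; have := Hall' b; move: tb0; rewrite neq_lt.
  by case/orP=> ->.
Qed.
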